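(* Let $\beta\in(0,\infty)$ and, for each $N\ge 1$, let $K=K_N$ be a positive integer with $K_N/N\to\beta$ as $N\to\infty$. Let $\boldsymbol{S}\in\mathbb{R}^{N\times K}$ be a random time-hopping matrix with $N_{\mathsf s}=1$, i.e. its columns $\boldsymbol{s}_1,\dots,\boldsymbol{s}_K$ are independent, and $\boldsymbol{s}_k=\epsilon_k\boldsymbol{e}_{\pi_k}$ where $\pi_k$ is uniform on $\{1,\dots,N\}$, $\epsilon_k$ is uniform on $\{-1,+1\}$, and all $\pi_k,\epsilon_k$ are independent. For an integer $L\ge 1$ let \[ m_L:=\frac{1}{N}\operatorname{Tr}\big(\boldsymbol{S}\boldsymbol{S}^{\mathsf T}\big)^L. \] Then, as $N\to\infty$, $m_L$ converges in probability to \[ \bar m_L:=\sum_{\ell=1}^{L}\left\{ {L \atop \ell}\right\}\beta^{\ell}, \] the $L$th moment of a Poisson distribution with mean $\beta$, where $\left\{ {L \atop \ell}\right\}$ denotes the Stirling number of the second kind.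
   Context: $\boldsymbol{e}_i$ denotes the $i$th standard basis vector of $\mathbb{R}^N$. The limit regime $N\to\infty$, $K\to\infty$, $K/N\to\beta$ is called the large-system limit. *)

(* Defs.v *)
From HB Require Import structures.
From mathcomp Require Import all_boot all_order all_algebra.
From mathcomp Require Import reals.
Set Implicit Arguments. Unset Strict Implicit. Unset Printing Implicit Defensive.
Import Order.TTheory GRing.Theory Num.Theory.
Local Open Scope ring_scope.

Fixpoint stirling2 (n k : nat) : nat :=
  match n with
  | 0 => (k == 0)%N
  | n'.+1 => match k with
             | 0 => 0
             | k'.+1 => (k * stirling2 n' k + stirling2 n' k')%N
             end
  end.

(* Sample space for N = n.+1 rows and k columns: for each column j,
   the pair (pi_j, eps_j) with pi_j in {1..N} (as 'I_N) and
   eps_j in bool (true = +1, false = -1). Uniform measure on it makes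
   all pi_j, eps_j independent and uniform. *)
Definition Omega (n k : nat) := {ffun 'I_k -> 'I_n.+1 * bool}.

Definition unif_prob (R : realType) (T : finType) (P : pred T) : R :=
  (#|[pred w | P w]|)%:R / (#|{: T}|)%:R.

Definition thmx (R : realType) (n k : nat) (w : Omega n k) : 'M[R]_(n.+1, k) :=
  \matrix_(i, j) (if i == (w j).1 then (if (w j).2 then 1 else -1) else 0).

Definition moment (R : realType) (n k : nat) (w : Omega n k) (L : nat) : R :=
  (n.+1%:R)^-1 * \tr ((thmx R w *m (thmx R w)^T) ^+ L).

Definition mbar (R : realType) (beta : R) (L : nat) : R :=
  \sum_(1 <= l < L.+1) (stirling2 L l)%:R * beta ^+ l.

(* Main.v *)
Require Import Defs.
From HB Require Import structures.
From mathcomp Require Import all_boot all_order all_algebra.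
From mathcomp Require Import reals.
From mathcomp Require Import ring lra.
Import Order.TTheory GRing.Theory Num.Theory.
Local Open Scope ring_scope.

Section Comb.
Variables (n k : nat).
Local Notation Om := (Omega n k).

Lemma card_Om : #|{: Om}| = ((n.+1 * 2) ^ k)%N.
Proof. by rewrite /Omega card_ffun card_prod card_ord card_bool card_ord. Qed.

Definition evt (T : {set 'I_k}) (i : 'I_n.+1) : pred Om :=
  [pred w : Om | [forall j in T, (w j).1 == i]].

Lemma card_pr1 (i : 'I_n.+1) : #|[pred p : 'I_n.+1 * bool | p.1 == i]| = 2%N.
Proof.
have -> : #|[pred p : 'I_n.+1 * bool | p.1 == i]| = #|setX [set i] [set: bool]|.
  by apply: eq_card => -[a b]; rewrite !inE andbT.
by rewrite cardsX cards1 cardsT card_bool.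
Qed.

Lemma card_prT : #|[pred p : 'I_n.+1 * bool | true]| = (n.+1 * 2)%N.
Proof.
have -> : (n.+1 * 2 = #|{: 'I_n.+1 * bool}|)%N by rewrite card_prod card_ord card_bool.
by apply: eq_card.
Qed.

Lemma card_evt T i : (#|evt T i| * n.+1 ^ #|T| = (n.+1 * 2) ^ k)%N.
Proof.
pose F := fun j : 'I_k => if j \in T then [pred p : 'I_n.+1 * bool | p.1 == i]
                          else [pred p : 'I_n.+1 * bool | true].
have -> : #|evt T i| = #|(family F : simpl_pred Om)|.
  apply: eq_card => w; rewrite !inE.
  apply/forall_inP/familyP => H j.
    by rewrite /F; case: ifP => // jT; rewrite inE H.
  by move=> jT; have := H j; rewrite /F jT inE.
rewrite card_family foldrE big_map big_enum /=.
rewrite -prod_nat_const [X in (_ * X)%N]big_mkcond -big_split /=.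
rewrite -[in RHS](card_ord k) -prod_nat_const.
apply: eq_bigr => j _; rewrite /F; case: ifP => _.
  by rewrite card_pr1 mulnC.
by rewrite card_prT muln1.
Qed.

Lemma card_evt2 T T' i i' : i != i' ->
  (#|[pred w : Om | evt T i w && evt T' i' w]| * n.+1 ^ #|T| * n.+1 ^ #|T'|
     <= (n.+1 * 2) ^ k)%N.
Proof.
move=> ii'.
pose F := fun j : 'I_k => if j \in T then
     (if j \in T' then [pred p : 'I_n.+1 * bool | false] else [pred p : 'I_n.+1 * bool | p.1 == i])
   else (if j \in T' then [pred p : 'I_n.+1 * bool | p.1 == i'] else [pred p : 'I_n.+1 * bool | true]).
have -> : #|[pred w : Om | evt T i w && evt T' i' w]| = #|(family F : simpl_pred Om)|.
  apply: eq_card => w; rewrite !inE.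
  apply/andP/familyP => [[/forall_inP H1 /forall_inP H2] j|H].
    rewrite /F; case: ifP => jT; case: ifP => jT' //=; rewrite ?inE ?H1 ?H2 //.
    by move: (H1 _ jT) (H2 _ jT') ii' => /eqP -> /eqP ->; rewrite eqxx.
  split; apply/forall_inP => j jT; have := H j; rewrite /F jT.
    by case: ifP.
  by case: ifP.
rewrite card_family foldrE big_map big_enum /=.
rewrite -!prod_nat_const [X in (_ * X * _)%N]big_mkcond [X in (_ * X)%N]big_mkcond -!big_split /=.
rewrite -[in X in (_ <= X)%N](card_ord k) -prod_nat_const.
apply: leq_prod => j _; rewrite /F; case: ifP => _; case: ifP => _.
- by rewrite card0.
- by rewrite card_pr1 muln1 mulnC.
- by rewrite card_pr1 muln1 mulnC.
- by rewrite card_prT !muln1.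
Qed.


Definition hit (w : Om) (i : 'I_n.+1) : {set 'I_k} := [set j | (w j).1 == i].
Definition Xc (w : Om) (i : 'I_n.+1) : nat := #|hit w i|.
Definition img M (t : {ffun 'I_M -> 'I_k}) : {set 'I_k} := [set t s | s in 'I_M].
Arguments img {M} t.

Lemma mem_evt_img M (t : {ffun 'I_M -> 'I_k}) w i :
  (w \in evt (img t) i) = (t \in ffun_on (hit w i)).
Proof.
rewrite inE; apply/forall_inP/ffun_onP => H.
  by move=> s; rewrite inE; apply: H; apply: imset_f.
by move=> j /imsetP [s _ ->]; have := H s; rewrite inE.
Qed.

Lemma cardE_sum (T : finType) (A : pred T) : #|A| = (\sum_x (x \in A : nat))%N.
Proof.
by rewrite -sum1_card big_mkcond; apply: eq_bigr => x _; case: (x \in A).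
Qed.

Lemma sumXpow M i : (\sum_(w : Om) Xc w i ^ M =
   \sum_(t : {ffun 'I_M -> 'I_k}) #|evt (img t) i|)%N.
Proof.
transitivity (\sum_(w : Om) \sum_(t : {ffun 'I_M -> 'I_k})
                 (t \in ffun_on (hit w i) : nat))%N.
  apply: eq_bigr => w _; rewrite /Xc -[M in LHS]card_ord -card_ffun_on.
  exact: cardE_sum.
rewrite exchange_big; apply: eq_bigr => t _; rewrite cardE_sum.
by apply: eq_bigr => w _; rewrite mem_evt_img.
Qed.

Lemma sumXff r i : (\sum_(w : Om) (Xc w i) ^_ r =
   \sum_(t : {ffun 'I_r -> 'I_k} | injectiveb t) #|evt (img t) i|)%N.
Proof.
transitivity (\sum_(w : Om) \sum_(t : {ffun 'I_r -> 'I_k})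
                 ((t \in ffun_on (hit w i)) && injectiveb t : nat))%N.
  apply: eq_bigr => w _; rewrite /Xc -[r in LHS]card_ord -card_inj_ffuns_on.
  by rewrite cardE_sum; apply: eq_bigr => t _; rewrite inE.
rewrite exchange_big [RHS]big_mkcond; apply: eq_bigr => t _.
case: (injectiveb t); last by rewrite big1 // => w _; rewrite andbF.
by rewrite cardE_sum; apply: eq_bigr => w _; rewrite andbT mem_evt_img.
Qed.

Lemma sumXprod M i i' : (\sum_(w : Om) Xc w i ^ M * Xc w i' ^ M =
   \sum_(t : {ffun 'I_M -> 'I_k}) \sum_(t' : {ffun 'I_M -> 'I_k})
      #|[pred w : Om | evt (img t) i w && evt (img t') i' w]|)%N.
Proof.
transitivity (\sum_(w : Om) \sum_(t : {ffun 'I_M -> 'I_k}) \sum_(t' : {ffun 'I_M -> 'I_k})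
   ((t \in ffun_on (hit w i)) && (t' \in ffun_on (hit w i')) : nat))%N.
  apply: eq_bigr => w _; rewrite /Xc -[M in LHS]card_ord -!card_ffun_on.
  rewrite !cardE_sum big_distrlr /=; apply: eq_bigr => t _; apply: eq_bigr => t' _.
  by case: (t \in _); case: (t' \in _).
rewrite exchange_big; apply: eq_bigr => t _.
rewrite exchange_big; apply: eq_bigr => t' _.
rewrite cardE_sum; apply: eq_bigr => w _; rewrite -!mem_evt_img. by [].
Qed.

Lemma card_img_inj r (t : {ffun 'I_r -> 'I_k}) : injectiveb t -> #|img t| = r.
Proof. by move=> /injectiveP ti; rewrite /img card_imset // card_ord. Qed.

End Comb.
Arguments img {k M} t.
Arguments evt {n k} T i.
Arguments hit {n k} w i.
Arguments Xc {n k} w i.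
Arguments card_evt {n k} T i.
Arguments card_evt2 {n k} T T' i i'.
Arguments sumXpow {n k} M i.
Arguments sumXff {n k} r i.
Arguments sumXprod {n k} M i i'.
Arguments card_img_inj {k r} t.

Lemma stir_gt M r : (M < r)%N -> stirling2 M r = 0%N.
Proof.
elim: M r => [|M IH] [|r] //= hr.
have h : (M < r)%N := hr. by rewrite (IH r h) (IH r.+1 (ltnW h)) muln0.
Qed.

Lemma stir_0 M : (0 < M)%N -> stirling2 M 0 = 0%N.
Proof. by case: M. Qed.

Lemma ffact_step x r : (x * x ^_ r = x ^_ r.+1 + r * x ^_ r)%N.
Proof.
rewrite ffactnSr; case: (leqP r x) => hr.
  by rewrite -{1}(subnK hr) mulnDl mulnC [(r * _)%N]mulnC.
by rewrite ffact_small // !(mul0n, muln0).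
Qed.

Lemma stirling_ffact x M B : (M < B)%N ->
  (x ^ M = \sum_(0 <= r < B) stirling2 M r * x ^_ r)%N.
Proof.
elim: M B => [|M IH] [|B] hB //.
  rewrite big_nat_recl //= big1 ?addn0 //= => r _.
rewrite expnS (IH B.+1 (ltnW hB)) big_distrr /=.
rewrite [in RHS]big_nat_recl // /= [X in (X + _)%N](_ : _ = 0%N) // add0n.
rewrite (eq_bigr (fun r => stirling2 M r * x ^_ r.+1 + r * stirling2 M r * x ^_ r)%N); last first.
  by move=> r _; rewrite mulnCA ffact_step mulnDr mulnCA mulnA.
rewrite big_split /= big_nat_recr //= (@stir_gt M B) // mul0n addn0.
rewrite [X in (_ + X)%N]big_nat_recl // mul0n add0n -big_split /=.
apply: eq_bigr => r _; rewrite mulnDl addnC mulnA; congr (_ + _)%N.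
Qed.

Section Real.
Variables (R : realType) (n k : nat).
Local Notation Om := (Omega n k).
Local Notation NN := (n.+1%:R : R).
Local Notation W := (((n.+1 * 2) ^ k)%N%:R : R).

Definition mu M : R := \sum_(t : {ffun 'I_M -> 'I_k}) (NN ^+ #|img t|)^-1.

Lemma NN_gt0 : 0 < NN. Proof. by rewrite ltr0n. Qed.
Lemma W_gt0 : 0 < W. Proof. by rewrite ltr0n expn_gt0 muln_gt0. Qed.

Lemma card_evtR (T : {set 'I_k}) (i : 'I_n.+1) : (#|evt T i|%:R : R) = W / NN ^+ #|T|.
Proof.
rewrite -(card_evt T i) natrM natrX mulfK // expf_neq0 //.
by rewrite gt_eqF // NN_gt0.
Qed.

Lemma mu_ge0 M : 0 <= mu M.
Proof. by apply: sumr_ge0 => t _; rewrite invr_ge0 exprn_ge0 // ltW // NN_gt0. Qed.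

Lemma sumXpowR M (i : 'I_n.+1) : \sum_(w : Om) ((Xc w i ^ M)%N%:R : R) = W * mu M.
Proof.
rewrite -natr_sum sumXpow natr_sum /mu mulr_sumr; apply: eq_bigr => t _.
by rewrite card_evtR.
Qed.

Lemma sumXprodR M (i i' : 'I_n.+1) : i != i' ->
  \sum_(w : Om) ((Xc w i ^ M * Xc w i' ^ M)%N%:R : R) <= W * mu M ^+ 2.
Proof.
move=> ii'.
rewrite -natr_sum sumXprod natr_sum /mu expr2 big_distrlr mulr_sumr /=.
apply: ler_sum => t _; rewrite natr_sum mulr_sumr; apply: ler_sum => t' _.
have h := card_evt2 (img t) (img t') i i' ii'.
have hp : 0 < NN ^+ #|img t| * NN ^+ #|img t'|.
  by rewrite mulr_gt0 // exprn_gt0 // NN_gt0.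
rewrite -invfM ler_pdivlMr //.
by rewrite -!natrX -!natrM ler_nat mulnA.
Qed.

Lemma sumXffR r (i : 'I_n.+1) : \sum_(w : Om) (((Xc w i) ^_ r)%N%:R : R) = W * (k ^_ r)%:R / NN ^+ r.
Proof.
rewrite -natr_sum sumXff natr_sum.
rewrite (eq_bigr (fun _ => W / NN ^+ r)); last first.
  by move=> t tinj; rewrite card_evtR card_img_inj.
rewrite (eq_bigl (fun t => t \in [set t : {ffun 'I_r -> 'I_k} | injectiveb t])); last first.
  by move=> t; rewrite inE.
rewrite sumr_const card_inj_ffuns !card_ord.
have gen : forall (a b : R) m, a / b *+ m = a * m%:R / b by move=> a b m; rewrite -mulr_natr mulrAC.
by rewrite gen.
Qed.

Lemma mu_stir M : mu M = \sum_(0 <= r < M.+1) (stirling2 M r)%:R * ((k ^_ r)%:R / NN ^+ r).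
Proof.
have Wn0 : W != 0 by rewrite gt_eqF // W_gt0.
apply: (mulfI Wn0); rewrite -(sumXpowR M ord0).
rewrite (eq_bigr (fun w => \sum_(0 <= r < M.+1) (stirling2 M r)%:R * ((Xc w ord0) ^_ r)%N%:R)); last first.
  by move=> w _; rewrite (@stirling_ffact _ M M.+1 (ltnSn M)) natr_sum; apply: eq_bigr => r _; rewrite natrM.
rewrite exchange_big mulr_sumr; apply: eq_bigr => r _.
by rewrite -mulr_sumr sumXffR [RHS]mulrCA !mulrA.
Qed.

End Real.

Section Main.
Variables (R : realType) (n k : nat).
Local Notation Om := (Omega n k).
Local Notation NN := (n.+1%:R : R).
Local Notation W := (((n.+1 * 2) ^ k)%N%:R : R).

Lemma thmx_gram (w : Om) :
  thmx R w *m (thmx R w)^T = diag_mx (\row_i ((Xc w i)%:R : R)).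
Proof.
apply/matrixP => i i'; rewrite !mxE.
under eq_bigr do rewrite !mxE.
case: (eqVneq i i') => [<-|ii'].
  rewrite mulr1n /Xc cardE_sum natr_sum; apply: eq_bigr => j _.
  rewrite inE eq_sym; case: ((w j).1 == i) => /=; last by rewrite mulr0.
  by case: (w j).2; rewrite ?mulr1 ?mulrNN ?mulr1.
rewrite mulr0n big1 // => j _.
case: eqP => [hi|]; last by rewrite mul0r.
case: eqP => [hi'|]; last by rewrite mulr0.
by move: ii'; rewrite hi hi' eqxx.
Qed.

Lemma diag_exp (d : 'rV[R]_n.+1) L : (diag_mx d) ^+ L = diag_mx (\row_i (d 0 i ^+ L)).
Proof.
elim: L => [|L IH].
  by apply/matrixP => i j; rewrite !mxE expr0.
rewrite exprS IH -mulmxE mulmx_diag; congr diag_mx; apply/matrixP => i j.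
by rewrite !mxE exprS.
Qed.

Lemma momentE (w : Om) L : moment R w L = NN^-1 * \sum_i ((Xc w i ^ L)%N%:R : R).
Proof.
rewrite /moment thmx_gram diag_exp mxtrace_diag; congr (_ * _).
by apply: eq_bigr => i _; rewrite !mxE natrX.
Qed.

Lemma sum_moment L : \sum_(w : Om) moment R w L = W * mu R n k L.
Proof.
under eq_bigr do rewrite momentE.
rewrite -mulr_sumr exchange_big /=.
under eq_bigr do rewrite sumXpowR.
have NN0 : NN != 0 by rewrite gt_eqF // ltr0n.
rewrite sumr_const card_ord.
have gen : forall x : R, NN^-1 * (x *+ n.+1) = x by move=> x; rewrite -[x *+ n.+1]mulr_natl mulrA mulVf // mul1r.
by rewrite gen.
Qed.

Lemma sum_moment2 L : \sum_(w : Om) moment R w L ^+ 2 <=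
   W * mu R n k L ^+ 2 + W * mu R n k (L + L) / NN.
Proof.
have NN0 : NN != 0 by rewrite gt_eqF // ltr0n.
set a := W * mu R n k L ^+ 2; set b := W * mu R n k (L + L).
have e1 : forall w : Om, moment R w L ^+ 2 =
   NN^-1 ^+ 2 * \sum_i \sum_i' ((Xc w i ^ L * Xc w i' ^ L)%N%:R : R).
  move=> w; rewrite momentE exprMn [X in _ * X]expr2 big_distrlr /=; congr (_ * _).
  by apply: eq_bigr => i _; apply: eq_bigr => i' _; rewrite natrM.
under eq_bigr do rewrite e1.
rewrite -mulr_sumr exchange_big /=.
under eq_bigr do rewrite exchange_big /=.
have bnd : forall i i' : 'I_n.+1,
   \sum_(w : Om) ((Xc w i ^ L * Xc w i' ^ L)%N%:R : R) <= a + (i == i')%:R * b.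
  move=> i i'; case: (eqVneq i i') => [<-|ii'].
    rewrite mul1r (eq_bigr (fun w => ((Xc w i ^ (L + L))%N%:R : R))); last first.
      by move=> w _; rewrite expnD.
    rewrite sumXpowR -/b lerDr /a mulr_ge0 // ?exprn_ge0 ?mu_ge0 // ler0n.
  by rewrite mul0r addr0 sumXprodR.
have bnd2 : \sum_i \sum_i' \sum_(w : Om) ((Xc w i ^ L * Xc w i' ^ L)%N%:R : R)
     <= \sum_(i : 'I_n.+1) \sum_(i' : 'I_n.+1) (a + (i == i')%:R * b).
  by apply: ler_sum => i _; apply: ler_sum => i' _; apply: bnd.
have e2 : \sum_(i : 'I_n.+1) \sum_(i' : 'I_n.+1) (a + (i == i')%:R * b) = NN * (NN * a + b).
  have gen2 : forall x : R, x *+ n.+1 = NN * x by move=> x; rewrite -[x *+ _]mulr_natl.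
  have e3 : forall i : 'I_n.+1, \sum_(i' : 'I_n.+1) (a + (i == i')%:R * b) = NN * a + b.
    move=> i; rewrite big_split /= sumr_const card_ord gen2.
    congr (_ + _); rewrite (bigD1 i) //= eqxx mul1r big1 ?addr0 // => j /negbTE.
    by rewrite eq_sym => ->; rewrite mul0r.
  by rewrite (eq_bigr _ (fun i _ => e3 i)) sumr_const card_ord gen2.
have h0 : 0 <= NN^-1 ^+ 2 by rewrite exprn_ge0 // invr_ge0 ler0n.
apply: le_trans (ler_wpM2l h0 bnd2) _.
rewrite e2 le_eqVlt; apply/orP; left; apply/eqP.
clearbody a b. field. by rewrite addrC natr1.
Qed.

Lemma chebyshev (f : Om -> R) (eps : R) : 0 < eps ->
  #|[pred w : Om | eps < `|f w|]|%:R * eps ^+ 2 <= \sum_(w : Om) f w ^+ 2.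
Proof.
move=> he; rewrite cardE_sum natr_sum mulr_suml; apply: ler_sum => w _.
rewrite inE /=; case: (ltrP eps `|f w|) => h /=.
  rewrite mul1r -(real_normK (num_real (f w))).
  have h2 : 0 <= `|f w| by [].
  nra.
by rewrite mul0r sqr_ge0.
Qed.



Lemma prob_bound (L : nat) (c eps : R) : 0 < eps ->
  unif_prob R (fun w : Om => eps < `|moment R w L - c|) <=
  ((mu R n k L - c) ^+ 2 + mu R n k (L + L) / NN) / eps ^+ 2.
Proof.
move=> he.
have W0 : 0 < W by rewrite ltr0n expn_gt0 muln_gt0.
have e2 : 0 < eps ^+ 2 by rewrite exprn_gt0.
rewrite /unif_prob card_Om ler_pdivrMr // mulrAC ler_pdivlMr //.
apply: (le_trans (_ : _ <= \sum_(w : Om) (moment R w L - c) ^+ 2)).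
  exact: (@chebyshev (fun w => moment R w L - c) eps he).
have e : forall w : Om, (moment R w L - c) ^+ 2 =
    moment R w L ^+ 2 + (c ^+ 2 - c *+ 2 * moment R w L).
  by move=> w; rewrite sqrrB; ring.
rewrite (eq_bigr _ (fun w _ => e w)) big_split /= sumrB sumr_const -mulr_sumr.
rewrite sum_moment card_Om.
apply: le_trans (lerD (sum_moment2 L) (lexx _)) _.
rewrite le_eqVlt; apply/orP; left; apply/eqP.
rewrite -[c ^+ 2 *+ _]mulr_natr.
have NN0 : NN != 0 by rewrite gt_eqF // ltr0n.
move: (mu R n k L) (mu R n k (L + L)) W => x y z.
field. by rewrite addrC natr1.
Qed.
End Main.

From mathcomp Require Import all_classical all_reals all_analysis.
Import Order.TTheory GRing.Theory Num.Theory.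
Import numFieldNormedType.Exports.
Local Open Scope ring_scope.

Local Open Scope classical_set_scope.

Section Asym.
Variable R : realType.

Lemma hyp_cvg (u : nat -> R) (l : R) :
  (forall e : R, 0 < e -> exists n0, forall n, (n0 <= n)%N -> `|u n - l| < e) ->
  u @ \oo --> l.
Proof.
move=> h; apply/cvgrPdist_lt => e e0.
have [n0 hn] := h e e0.
exists n0 => // m /= hm; rewrite distrC; exact: hn.
Qed.

Lemma near_ex (P : nat -> Prop) : (\forall n \near \oo, P n) -> exists n0, forall n, (n0 <= n)%N -> P n.
Proof.
by move=> [n0 _ hn]; exists n0 => m hm; apply: hn.
Qed.

Lemma cvg_pow (f : nat -> R) (l : R) r : f @ \oo --> l -> (fun n => f n ^+ r) @ \oo --> l ^+ r.
Proof.
move=> hf; elim: r => [|r IH].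
  rewrite expr0; under eq_fun do rewrite expr0; exact: cvg_cst.
under eq_fun do rewrite exprS; rewrite exprS.
exact: cvgM.
Qed.

Lemma cvg_sumnat (g : nat -> nat -> R) (l : nat -> R) m :
  (forall r, g r @ \oo --> l r) ->
  (fun n => \sum_(0 <= r < m) g r n) @ \oo --> \sum_(0 <= r < m) l r.
Proof.
move=> hg; elim: m => [|m IH].
  rewrite big_geq //; under eq_fun do rewrite big_geq //; exact: cvg_cst.
under eq_fun do rewrite big_nat_recr //=; rewrite big_nat_recr //=.
exact: cvgD.
Qed.

End Asym.

Local Open Scope classical_set_scope.

Lemma ffact_lb K r a : (a <= K - r)%N -> (a ^ r <= K ^_ r)%N.
Proof.
elim: r a => [|r IH] a ha; first by rewrite expn0 ffactn0.
rewrite expnSr ffactnSr leq_mul //; last first.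
  by apply: leq_trans ha _; apply: leq_sub2l.
apply: IH; apply: leq_trans ha _; apply: leq_sub2l; exact: leqnSn.
Qed.

Lemma ffact_ub K r : (K ^_ r <= K ^ r)%N.
Proof.
elim: r => [|r IH]; first by rewrite expn0 ffactn0.
by rewrite expnSr ffactnSr leq_mul // leq_subr.
Qed.

Section Final.
Variables (R : realType) (beta : R) (K : nat -> nat).
Hypothesis hK : forall e : R, 0 < e -> exists n0, forall n, (n0 <= n)%N ->
       `|(K n)%:R / (n.+1)%:R - beta| < e.

Lemma u_cvg : (fun n => (K n)%:R / (n.+1)%:R : R) @ \oo --> beta.
Proof. exact: hyp_cvg. Qed.

Lemma v_cvg r : (fun n => ((K n - r)%N)%:R / (n.+1)%:R : R) @ \oo --> beta.
Proof.
apply: (@squeeze_cvgr _ _ _ _ (fun n => (K n)%:R / (n.+1)%:R - r%:R * harmonic n)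
   (fun n => (K n)%:R / (n.+1)%:R)).
- apply: nearW => m /=; apply/andP; split.
    rewrite -mulrBl ler_pM2r ?invr_gt0 ?ltr0n //.
    case: (leqP r (K m)) => h; first by rewrite natrB.
    have -> : (K m - r)%N = 0%N by apply/eqP; rewrite subn_eq0 ltnW.
    by rewrite subr_le0 ler_nat ltnW.
  by rewrite ler_pM2r ?invr_gt0 ?ltr0n // ler_nat leq_subr.
- rewrite -[beta]subr0 -(mulr0 (r%:R : R)).
  apply: cvgB; first exact: u_cvg.
  apply: cvgM; first exact: cvg_cst.
  exact: cvg_harmonic.
- exact: u_cvg.
Qed.

Lemma f_cvg r : (fun n => ((K n) ^_ r)%:R / (n.+1%:R) ^+ r : R) @ \oo --> beta ^+ r.
Proof.
apply: (@squeeze_cvgr _ _ _ _ (fun n => (((K n - r)%N)%:R / (n.+1)%:R) ^+ r)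
   (fun n => ((K n)%:R / (n.+1)%:R) ^+ r)).
- apply: nearW => m /=; rewrite !expr_div_n; apply/andP; split.
    by rewrite ler_pM2r ?invr_gt0 ?exprn_gt0 ?ltr0n // -natrX ler_nat ffact_lb.
  by rewrite ler_pM2r ?invr_gt0 ?exprn_gt0 ?ltr0n // -natrX ler_nat ffact_ub.
- exact: cvg_pow (v_cvg r).
- exact: cvg_pow u_cvg.
Qed.

Lemma mu_cvg M : (fun n => mu R n (K n) M) @ \oo -->
   \sum_(0 <= r < M.+1) (stirling2 M r)%:R * beta ^+ r.
Proof.
under eq_fun do rewrite mu_stir.
apply: cvg_sumnat => r.
apply: cvgM; first exact: cvg_cst.
exact: f_cvg.
Qed.

End Final.

Lemma mbarE (R : realType) (beta : R) L : (0 < L)%N ->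
  mbar beta L = \sum_(0 <= r < L.+1) (stirling2 L r)%:R * beta ^+ r.
Proof.
move=> hL; rewrite /mbar [RHS]big_nat_recl // stir_0 // mul0r add0r.
by rewrite big_add1.
Qed.

Local Open Scope classical_set_scope.

Theorem theorem1 (R : realType) (beta : R) (K : nat -> nat) (L : nat) :
  0 < beta ->
  (forall n, (0 < K n)%N) ->
  (* K_N / N -> beta, with N = n.+1 *)
  (forall e : R, 0 < e -> exists n0, forall n, (n0 <= n)%N ->
       `|(K n)%:R / (n.+1)%:R - beta| < e) ->
  (0 < L)%N ->
  (* m_L converges in probability to mbar_L *)
  forall eps : R, 0 < eps -> forall delta : R, 0 < delta ->
  exists n0, forall n, (n0 <= n)%N ->
    unif_prob R (fun w : Omega n (K n) =>
                   eps < `|moment R w L - mbar beta L|) < delta.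
Proof.
move=> _ _ hK hL eps he delta hd.
pose B n := (mu R n (K n) L - mbar beta L) ^+ 2 + mu R n (K n) (L + L) * harmonic n.
have hB : B @ \oo --> (0 : R).
  rewrite -[0 : R]addr0.
  apply: cvgD.
    rewrite -(mulr0 (0 : R)) -expr2.
    apply: cvg_pow; rewrite -(subrr (mbar beta L)).
    apply: cvgB; last exact: cvg_cst.
    rewrite (@mbarE R beta L hL); exact: (@mu_cvg R beta K hK L).
  rewrite -(mulr0 (\sum_(0 <= r < (L + L).+1) (stirling2 (L + L) r)%:R * beta ^+ r)).
  apply: cvgM; first exact: (@mu_cvg R beta K hK (L + L)).
  exact: cvg_harmonic.
have e2 : 0 < delta * eps ^+ 2 by rewrite mulr_gt0 // exprn_gt0.
have [n0 hn0] := @near_ex _ (@cvgr_dist_lt _ _ _ _ _ B 0 hB _ e2).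
exists n0 => n hn.
apply: le_lt_trans (@prob_bound R n (K n) L (mbar beta L) eps he) _.
rewrite ltr_pdivrMr ?exprn_gt0 //.
have := hn0 n hn; rewrite sub0r normrN.
apply: le_lt_trans; exact: ler_norm.
Qed.
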